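(* In the standing setup, assume the element $j\in G$ with $\rho(j)=\mathrm{diag}(e^{2\pi iq_1},\dots,e^{2\pi iq_n})$ exists, and fix $\sigma\in\mathrm{Hom}(G,\mathbb{Z}/2\mathbb{Z})$. If $\sigma(h)(\sigma(j)+1)\equiv 0 \pmod 2$ for all $h\in G$ (which holds for instance if $\sigma(j)=1$ or $\sigma\equiv 0$), then for every $h\in G$ and every homogeneous $a\in M_{f_h}$, $$\varphi(h^{-1}j)(a1_h)=e^{2\pi i(\deg a+s_h)}\,a1_h,$$ i.e. $\varphi(h^{-1}j)|_{A_h}=\exp(2\pi i\mathcal{Q})|_{A_h}$ where $\mathcal{Q}(a1_h)=(\deg a+s_h)a1_h$; thus $GM_f$ is $G$-Euler.
   Context: Standing setup. Let $f\in\mathbb{C}[z_1,\dots,z_n]$ be quasi-homogeneous with an isolated singularity at $0$, with weights $q_i\in(0,1)$ (so $f(e^{tq_1}z_1,\dots,e^{tq_n}z_n)=e^tf(z)$); $M_f=\mathbb{C}[z]/(\partial_1f,\dots,\partial_nf)$ graded by $\deg z_i=q_i$. $G$ is a finite abelian group with a diagonal representation $\rho:G\to GL(n,\mathbb{C})$ leaving $f$ invariant; $\rho(g)=\mathrm{diag}(e^{2\pi i\nu_i(g)})$ with $\nu_i(g)\in[0,1)$; $\mathrm{Fix}(g)$ is the span of the $z_i$ with $\nu_i(g)=0$, $f_g=f|_{\mathrm{Fix}(g)}$, $A_g=M_{f_g}$ (equal to $\mathbb{C}$ if $\mathrm{Fix}(g)=0$) with elements $a1_g$, and $GM_f=\bigoplus_gA_g$.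 Shift $s_g=\sum_{i:\nu_i(g)\ne0}(\nu_i(g)-q_i)$. Given $\sigma\in\mathrm{Hom}(G,\mathbb{Z}/2\mathbb{Z})$, the $G$-action on $GM_f$ is $$\varphi(h)(a1_g)=(-1)^{\sigma(h)\sigma(g)}\det(\rho(h))^{-1}\det(\rho(h)|_{\mathrm{Fix}(g)})\,(a\circ\rho(h))\,1_g,$$ where $(a\circ\rho(h))(z)=a(\rho(h)z)$ and the determinant of the restriction to the zero space is $1$. $GM_f$ is called $G$-Euler if there is a central $j$ with $\varphi(h^{-1}j)|_{A_h}=\exp(2\pi i\mathcal{Q})|_{A_h}$ for all $h$. *)

(* Defs.v *)
From HB Require Import structures.
From mathcomp Require Import all_boot all_order all_algebra all_fingroup.
From mathcomp Require Import mpoly.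
From mathcomp Require Import complex.
From mathcomp Require Import reals sequences exp trigo.

Set Implicit Arguments.
Unset Strict Implicit.
Unset Printing Implicit Defensive.

Import GRing.Theory Num.Theory.
Local Open Scope ring_scope.
Local Open Scope complex_scope.

Section Defs.
Variable R : realType.
Variable n : nat.
Local Notation C := R[i].

Definition e2pi (x : R) : C := (cos (2 * pi * x)) +i* (sin (2 * pi * x)).

Definition lin_comp (M : 'M[C]_n) (a : {mpoly C[n]}) : {mpoly C[n]} :=
  comp_mpoly [tuple \sum_(k < n) M i k *: 'X_k | i < n] a.

Definition quasi_homogeneous (q : 'I_n -> R) (f : {mpoly C[n]}) : Prop :=
  forall (t : R) (z : 'I_n -> C),
    meval (fun i => (expR (t * q i))%:C * z i) f = (expR t)%:C * meval z f.

Definition isolated_singularity (f : {mpoly C[n]}) : Prop :=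
  exists eps : R, 0 < eps /\
    forall z : 'I_n -> C, (forall i, `|z i| < eps%:C) ->
      (forall i, meval z (mderiv i f) = 0) -> z = (fun _ => 0).

Section WithNu.
Variable gT : finGroupType.
Variable nu : gT -> 'I_n -> R.

(* i indexes a coordinate of Fix(g) *)
Definition in_fix (g : gT) (i : 'I_n) : bool := nu g i == 0.

Definition supported_on_fix (g : gT) (a : {mpoly C[n]}) : Prop :=
  forall m, m \in msupp a -> forall i, ~~ in_fix g i -> m i = 0%N.

Definition restrict_fix (g : gT) (f : {mpoly C[n]}) : {mpoly C[n]} :=
  comp_mpoly [tuple (if in_fix g i then 'X_i else 0) | i < n] f.

(* equality of a 1_g and b 1_g in A_g = M_{f_g}
   = C[z_i : i in Fix g] / (d_i f_g : i in Fix g) *)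
Definition milnor_eq (f : {mpoly C[n]}) (g : gT) (a b : {mpoly C[n]}) : Prop :=
  exists c : 'I_n -> {mpoly C[n]},
    (forall i, supported_on_fix g (c i)) /\
    a - b = \sum_(i < n | in_fix g i) c i * mderiv i (restrict_fix g f).

Definition weighted_homog (q : 'I_n -> R) (d : R) (a : {mpoly C[n]}) : Prop :=
  forall m, m \in msupp a -> \sum_(i < n) q i * (m i)%:R = d.

(* det (M restricted to Fix(g)), computed in the basis (e_i)_{i in Fix g};
   equal to 1 if Fix(g) = 0 *)
Definition det_fix (M : 'M[C]_n) (g : gT) : C :=
  let A := [set i : 'I_n | in_fix g i] in
  \det (mxsub (fun k : 'I_#|A| => enum_val k) (fun k : 'I_#|A| => enum_val k) M).

Definition shift (q : 'I_n -> R) (g : gT) : R :=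
  \sum_(i < n | ~~ in_fix g i) (nu g i - q i).

(* phi(h)(a 1_g), returned as the representative polynomial of the A_g-part;
   sigma : G -> Z/2Z encoded as bool (xor) *)
Definition phi (sigma : gT -> bool) (rho : gT -> 'M[C]_n) (h g : gT)
    (a : {mpoly C[n]}) : {mpoly C[n]} :=
  ((-1) ^+ (sigma h * sigma g)%N * (\det (rho h))^-1 * det_fix (rho h) g)
    *: lin_comp (rho h) a.

Definition G_Euler (q : 'I_n -> R) (G : {group gT}) (sigma : gT -> bool)
    (rho : gT -> 'M[C]_n) (f : {mpoly C[n]}) : Prop :=
  exists j0, j0 \in G /\ (forall g, g \in G -> commute j0 g) /\
    forall h, h \in G -> forall (d : R) (a : {mpoly C[n]}),
      supported_on_fix h a -> weighted_homog q d a ->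
      milnor_eq f h (phi sigma rho (h^-1 * j0) h a) (e2pi (d + shift q h) *: a).

End WithNu.
End Defs.

(* Main.v *)
Require Import Defs.
From HB Require Import structures.
From mathcomp Require Import all_boot all_order all_algebra all_fingroup.
From mathcomp Require Import mpoly.
From mathcomp Require Import complex.
From mathcomp Require Import reals sequences exp trigo.
From mathcomp Require Import ring.
Import GRing.Theory Num.Theory.
Local Open Scope ring_scope.
Local Open Scope complex_scope.
Lemma e2piD (R : realType) (x y : R) : e2pi (x + y) = e2pi x * e2pi y.
Proof.
rewrite /e2pi mulrDr cosD sinD /=. congr (_ +i* _); ring.
Qed.
Lemma e2pi0 (R : realType) : e2pi (0:R) = 1.
Proof. rewrite /e2pi mulr0 cos0 sin0. reflexivity. Qed.
Lemma e2piN (R : realType) (x : R) : e2pi x * e2pi (- x) = 1.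
Proof. by rewrite -e2piD subrr e2pi0. Qed.
Lemma e2pi_sum (R : realType) (I : Type) (r : seq I) (P : pred I) (F : I -> R) :
  e2pi (\sum_(i <- r | P i) F i) = \prod_(i <- r | P i) e2pi (F i).
Proof. exact: (big_morph _ (@e2piD R) (@e2pi0 R)). Qed.
Lemma e2piX (R : realType) (x : R) k : e2pi x ^+ k = e2pi (x *+ k).
Proof. elim: k => [|k IH]; first by rewrite expr0 mulr0n e2pi0.
by rewrite exprS IH mulrS e2piD. Qed.
Lemma e2piV (R : realType) (x : R) : (e2pi x)^-1 = e2pi (- x).
Proof.
have nz : e2pi x != 0.
  apply/eqP => h; move: (@e2piN _ x); rewrite h mul0r => /eqP; by rewrite eq_sym oner_eq0.
by apply: (mulfI nz); rewrite mulfV // e2piN.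
Qed.
Lemma lin_comp_diag (R : realType) (n : nat) (D : 'I_n -> R[i]) (a : {mpoly R[i][n]}) :
  lin_comp (diag_mx (\row_i D i)) a =
  \sum_(m <- msupp a) ((a@_m * \prod_(i < n) D i ^+ m i) *: 'X_[m]).
Proof.
rewrite /lin_comp comp_mpolyEX; apply: eq_bigr => m _.
rewrite comp_mpolyX -scalerA; congr (_ *: _).
rewrite (eq_bigr (fun i => (D i ^+ m i) *: 'X_i ^+ m i)); last first.
  move=> i _; rewrite tnth_mktuple (bigD1 i) //= big1 ?addr0.
    by rewrite !mxE eqxx mulr1n exprZn.
  by move=> k /negbTE ki; rewrite !mxE eq_sym ki mulr0n scale0r.
by rewrite scaler_prod -mpolyXE_id.
Qed.

Lemma det_fix_diag (R : realType) (n : nat) (gT : finGroupType) (nu : gT -> 'I_n -> R)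
  (D : 'I_n -> R[i]) (g : gT) :
  det_fix nu (diag_mx (\row_i D i)) g = \prod_(i < n | in_fix nu g i) D i.
Proof.
rewrite /det_fix.
set A := [set i : 'I_n | in_fix nu g i].
have -> : mxsub (fun k : 'I_#|A| => enum_val k) (fun k : 'I_#|A| => enum_val k)
    (diag_mx (\row_i D i)) = diag_mx (\row_k D (enum_val k)).
  apply/matrixP => k l; rewrite !mxE (inj_eq enum_val_inj) //.
rewrite det_diag.
rewrite (eq_bigr (fun k => D (enum_val k))); last by move=> k _; rewrite mxE.
rewrite -(big_enum_val (fun x : 'I_n => D x)).
by apply: eq_bigl => i; rewrite inE.
Qed.
Theorem mainTheorem2 (R : realType) (n : nat) (q : 'I_n -> R)
  (f : {mpoly R[i][n]})
  (gT : finGroupType) (G : {group gT})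
  (rho : gT -> 'M[R[i]]_n) (nu : gT -> 'I_n -> R)
  (sigma : gT -> bool) (j : gT) :
  (forall i, 0 < q i < 1) ->
  quasi_homogeneous q f ->
  isolated_singularity f ->
  abelian G ->
  rho 1%g = 1%:M ->
  (forall g h, g \in G -> h \in G -> rho (g * h)%g = rho g *m rho h) ->
  (forall g i, g \in G -> 0 <= nu g i < 1) ->
  (forall g, g \in G -> rho g = diag_mx (\row_i e2pi (nu g i))) ->
  (forall g, g \in G -> lin_comp (rho g) f = f) ->
  j \in G ->
  rho j = diag_mx (\row_i e2pi (q i)) ->
  (forall g h, g \in G -> h \in G -> sigma (g * h)%g = sigma g (+) sigma h) ->
  (forall h, h \in G -> ((sigma h * (sigma j + 1)) %% 2 = 0)%N) ->
  (forall h, h \in G -> forall (d : R) (a : {mpoly R[i][n]}),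
      supported_on_fix nu h a -> weighted_homog q d a ->
      milnor_eq nu f h (phi nu sigma rho (h^-1 * j)%g h a)
                (e2pi (d + shift nu q h) *: a))
  /\ G_Euler nu q G sigma rho f.
Proof.
move=> hq hqh hiso hab h1 hmul hnu hdiag hinv hj hrhoj hsig hsigj.
have part1 : forall h, h \in G -> forall (d : R) (a : {mpoly R[i][n]}),
    supported_on_fix nu h a -> weighted_homog q d a ->
    milnor_eq nu f h (phi nu sigma rho (h^-1 * j)%g h a)
              (e2pi (d + shift nu q h) *: a).
  move=> h hG d a supp hom.
  have hiG : (h^-1 \in G)%g by rewrite groupV.
  have eqnu : forall i, e2pi (nu h^-1%g i) = e2pi (- nu h i).
    move=> i; have := hmul _ _ hiG hG; rewrite mulVg h1 hdiag // hdiag // mulmx_diag.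
    move=> /matrixP /(_ i i); rewrite !mxE eqxx !mulr1n => H.
    by rewrite -[LHS]mulr1 -(@e2piN _ (nu h i)) mulrA -H mul1r.
  have rhohj : rho (h^-1 * j)%g = diag_mx (\row_i e2pi (q i - nu h i)).
    rewrite hmul // hdiag // hrhoj mulmx_diag; congr diag_mx; apply/rowP => i.
    by rewrite !mxE eqnu -e2piD addrC.
  have sign : (sigma (h^-1 * j)%g * sigma h)%N = 0%N.
    have s1 : sigma 1%g = false.
      by have := hsig _ _ (group1 G) (group1 G); rewrite mulg1; case: (sigma 1%g).
    have sV : sigma h^-1%g = sigma h.
      by have := hsig _ _ hiG hG; rewrite mulVg s1; case: (sigma h^-1%g); case: (sigma h).
    rewrite hsig // sV; have := hsigj _ hG; by case: (sigma h); case: (sigma j).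
  have e_phi : phi nu sigma rho (h^-1 * j)%g h a = e2pi (d + shift nu q h) *: a.
    rewrite /phi sign expr0 mul1r rhohj det_diag det_fix_diag lin_comp_diag.
    under eq_bigr do rewrite mxE.
    rewrite (eq_big_seq (fun m => (e2pi d * a@_m) *: 'X_[m])); last first.
      move=> m hm; congr (_ *: _); rewrite mulrC; congr (_ * _).
      rewrite -(hom m hm) e2pi_sum; apply: eq_bigr => i _; rewrite e2piX.
      case: (boolP (in_fix nu h i)) => fi.
        by move: fi; rewrite /in_fix => /eqP ->; rewrite subr0 mulr_natr.
      by rewrite (supp m hm i fi) mulr0n mulr0.
    rewrite (eq_bigr (fun m => e2pi d *: (a@_m *: 'X_[m]))); last by move=> m _; rewrite scalerA.
    rewrite -scaler_sumr -mpolyE scalerA; congr (_ *: _).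
    rewrite -!e2pi_sum e2piV -!e2piD; congr e2pi.
    rewrite [\sum_i _](bigID (in_fix nu h)) /= /shift.
    under [X in _ = _ + X]eq_bigr do rewrite -opprB.
    rewrite sumrN.
    set A := \sum_(i < n | in_fix nu h i) _.
    set B := \sum_(i < n | ~~ in_fix nu h i) _.
    by clearbody A B; ring.
  exists (fun _ => 0); split.
    by move=> i m; rewrite msupp0.
  by rewrite e_phi subrr big1 // => i _; rewrite mul0r.
split; first exact: part1.
exists j; split => //; split; last exact: part1.
by move=> g gG; exact: (centsP hab) j hj g gG.
Qed.
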